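(* Let $(\Phi,G)$, $(\Psi,H)$ be perception pairs and $T:G\to H$ a homomorphism. Then the set $\mathcal{F}^{\mathrm{all}}$ of all GENEOs from $(\Phi,G)$ to $(\Psi,H)$ associated with $T$ is compact with respect to $D_{\mathrm{GENEO}}$.
   Context: A perception pair $(\Phi,G)$ consists of: a nonempty set $X$; a nonempty set $\Phi$ of bounded functions $X\to\mathbb{R}$, compact with respect to $D_\Phi(\varphi_1,\varphi_2):=\|\varphi_1-\varphi_2\|_\infty$, such that $X$ is complete with respect to $D_X(x_1,x_2):=\sup_{\varphi\in\Phi}|\varphi(x_1)-\varphi(x_2)|$; and a subgroup $G$ of $\mathrm{Homeo}_\Phi(X)$ (bijections $g:X\to X$, homeomorphisms for $D_X$, with $\varphi\circ g,\varphi\circ g^{-1}\in\Phi$ for all $\varphi\in\Phi$) that is complete with respect to $D_G(g_1,g_2):=\sup_{\varphi\in\Phi}D_\Phi(\varphi\circ g_1,\varphi\circ g_2)$. Similarly $(\Psi,H)$ with $\Psi$ a set of functions on a set $Y$. A GENEO from $(\Phi,G)$ to $(\Psi,H)$ associated with $T$ is a map $F:\Phi\to\Psi$ with $F(\varphi\circ g)=F(\varphi)\circ T(g)$ for all $\varphi\in\Phi,g\in G$, and $D_\Psi(F(\varphi_1),F(\varphi_2))\le D_\Phi(\varphi_1,\varphi_2)$ for all $\varphi_1,\varphi_2\in\Phi$. $D_{\mathrm{GENEO}}(F_1,F_2):=\sup_{\varphi\in\Phi}D_\Psi(F_1(\varphi),F_2(\varphi))$. *)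

(* Defs.v *)
From Stdlib Require Import Reals Lra List ClassicalEpsilon.
Open Scope R_scope.

Definition supR (E : R -> Prop) : R :=
  epsilon (inhabits 0%R) (fun m => is_lub E m).

Definition Dfun {X : Type} (f g : X -> R) : R :=
  supR (fun r => exists x, r = Rabs (f x - g x)).

Definition DX {X : Type} (Phi : (X -> R) -> Prop) (x1 x2 : X) : R :=
  supR (fun r => exists phi, Phi phi /\ r = Rabs (phi x1 - phi x2)).

Definition DG {X : Type} (Phi : (X -> R) -> Prop) (g1 g2 : X -> X) : R :=
  supR (fun r => exists phi, Phi phi /\
          r = Dfun (fun x => phi (g1 x)) (fun x => phi (g2 x))).

Definition DGENEO {X Y : Type} (Phi : (X -> R) -> Prop)
  (F1 F2 : (X -> R) -> (Y -> R)) : R :=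
  supR (fun r => exists phi, Phi phi /\ r = Dfun (F1 phi) (F2 phi)).

Definition open_in {T : Type} (A : T -> Prop) (d : T -> T -> R) (U : T -> Prop) : Prop :=
  forall x, A x -> U x -> exists r, 0 < r /\ forall y, A y -> d x y < r -> U y.

Definition compact_in {T : Type} (A : T -> Prop) (d : T -> T -> R) : Prop :=
  forall (I : Type) (U : I -> T -> Prop),
    (forall i, open_in A d (U i)) ->
    (forall x, A x -> exists i, U i x) ->
    exists l : list I, forall x, A x -> exists i, In i l /\ U i x.

Definition complete_in {T : Type} (A : T -> Prop) (d : T -> T -> R) : Prop :=
  forall u : nat -> T, (forall n, A (u n)) ->
    (forall eps, 0 < eps -> exists N, forall m n, (N <= m)%nat -> (N <= n)%nat ->
        d (u m) (u n) < eps) ->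
    exists l, A l /\ forall eps, 0 < eps -> exists N, forall n, (N <= n)%nat ->
        d (u n) l < eps.

Definition continuous_wrt {X : Type} (d : X -> X -> R) (g : X -> X) : Prop :=
  forall x eps, 0 < eps -> exists delta, 0 < delta /\
    forall y, d x y < delta -> d (g x) (g y) < eps.

Definition Homeo_Phi {X : Type} (Phi : (X -> R) -> Prop) (g : X -> X) : Prop :=
  exists ginv : X -> X,
    (forall x, ginv (g x) = x) /\ (forall x, g (ginv x) = x) /\
    continuous_wrt (DX Phi) g /\ continuous_wrt (DX Phi) ginv /\
    (forall phi, Phi phi -> Phi (fun x => phi (g x)) /\ Phi (fun x => phi (ginv x))).

Definition is_subgroup_Homeo {X : Type} (Phi : (X -> R) -> Prop)
  (G : (X -> X) -> Prop) : Prop :=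
  (forall g, G g -> Homeo_Phi Phi g) /\
  G (fun x => x) /\
  (forall g1 g2, G g1 -> G g2 -> G (fun x => g1 (g2 x))) /\
  (forall g, G g -> exists h, G h /\ (forall x, h (g x) = x) /\ (forall x, g (h x) = x)).

Definition perception_pair {X : Type} (Phi : (X -> R) -> Prop)
  (G : (X -> X) -> Prop) : Prop :=
  inhabited X /\
  (exists phi, Phi phi) /\
  (forall phi, Phi phi -> exists M, forall x, Rabs (phi x) <= M) /\
  compact_in Phi Dfun /\
  complete_in (fun _ : X => True) (DX Phi) /\
  is_subgroup_Homeo Phi G /\
  complete_in G (DG Phi).

Definition is_hom {X Y : Type} (G : (X -> X) -> Prop) (H : (Y -> Y) -> Prop)
  (T : (X -> X) -> (Y -> Y)) : Prop :=
  (forall g, G g -> H (T g)) /\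
  (forall g1 g2, G g1 -> G g2 -> T (fun x => g1 (g2 x)) = (fun y => T g1 (T g2 y))).

Definition is_GENEO {X Y : Type} (Phi : (X -> R) -> Prop) (G : (X -> X) -> Prop)
  (Psi : (Y -> R) -> Prop) (T : (X -> X) -> (Y -> Y))
  (F : (X -> R) -> (Y -> R)) : Prop :=
  (forall phi, Phi phi -> Psi (F phi)) /\
  (forall phi g, Phi phi -> G g ->
     F (fun x => phi (g x)) = (fun y => F phi (T g y))) /\
  (forall phi1 phi2, Phi phi1 -> Phi phi2 -> Dfun (F phi1) (F phi2) <= Dfun phi1 phi2).

(* Main.v *)
Require Import Defs.
From Stdlib Require Import Reals.
From Stdlib Require Import Lra Lia List ClassicalEpsilon Classical FunctionalExtensionality.
Open Scope R_scope.

Ltac rabs := unfold Rabs in *; repeat match goal with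
  | |- context[Rcase_abs ?a] => destruct (Rcase_abs a)
  | H : context[Rcase_abs ?a] |- _ => destruct (Rcase_abs a) end; lra.

Lemma Rabs_tri3 a b c : Rabs (a - c) <= Rabs (a - b) + Rabs (b - c).
Proof. rabs. Qed.

Definition bnd {X : Type} (f : X -> R) := exists M, forall x, Rabs (f x) <= M.

Lemma supR_spec (E : R -> Prop) : (exists x, E x) -> (exists M, forall x, E x -> x <= M) ->
  is_lub E (supR E).
Proof.
  intros He [M HM]. unfold supR. apply epsilon_spec.
  destruct (completeness E) as [m Hm]. exists M; exact HM. exact He. exists m; exact Hm.
Qed.

Lemma Dfun_lub {X : Type} (f g : X -> R) : inhabited X -> bnd f -> bnd g ->
  is_lub (fun r => exists x, r = Rabs (f x - g x)) (Dfun f g).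
Proof.
  intros [x0] [M1 H1] [M2 H2]. apply supR_spec.
  - exists (Rabs (f x0 - g x0)); eauto.
  - exists (M1+M2). intros r [x ->]. specialize (H1 x). specialize (H2 x). rabs.
Qed.

Lemma Dfun_ub {X : Type} (f g : X -> R) x : bnd f -> bnd g -> Rabs (f x - g x) <= Dfun f g.
Proof.
  intros Hf Hg. destruct (Dfun_lub f g (inhabits x) Hf Hg) as [Hu _]. apply Hu. eauto.
Qed.

Lemma Dfun_le {X : Type} (f g : X -> R) c : inhabited X -> bnd f -> bnd g ->
  (forall x, Rabs (f x - g x) <= c) -> Dfun f g <= c.
Proof.
  intros Hi Hf Hg H. destruct (Dfun_lub f g Hi Hf Hg) as [_ Hl]. apply Hl.
  intros r [x ->]. auto.
Qed.

Lemma Dfun_nonneg {X : Type} (f g : X -> R) : inhabited X -> bnd f -> bnd g -> 0 <= Dfun f g.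
Proof.
  intros [x] Hf Hg. eapply Rle_trans; [apply Rabs_pos| apply (Dfun_ub f g x Hf Hg)].
Qed.

Lemma Dfun_refl {X : Type} (f : X -> R) : inhabited X -> bnd f -> Dfun f f = 0.
Proof.
  intros Hi Hf. apply Rle_antisym.
  - apply Dfun_le; auto. intros x. rabs.
  - apply Dfun_nonneg; auto.
Qed.

Lemma Dfun_sym {X : Type} (f g : X -> R) : inhabited X -> bnd f -> bnd g -> Dfun f g = Dfun g f.
Proof.
  intros Hi Hf Hg. apply Rle_antisym; apply Dfun_le; auto; intro x;
  rewrite Rabs_minus_sym; apply Dfun_ub; auto.
Qed.

Lemma Dfun_tri {X : Type} (f g h : X -> R) : inhabited X -> bnd f -> bnd g -> bnd h ->
  Dfun f h <= Dfun f g + Dfun g h.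
Proof.
  intros Hi Hf Hg Hh. apply Dfun_le; auto. intro x.
  eapply Rle_trans; [apply (Rabs_tri3 _ (g x))|].
  apply Rplus_le_compat; apply Dfun_ub; auto.
Qed.

Definition pmet {T : Type} (A : T -> Prop) (d : T -> T -> R) :=
  (forall x, A x -> d x x = 0) /\ (forall x y, A x -> A y -> d x y = d y x) /\
  (forall x y z, A x -> A y -> A z -> d x z <= d x y + d y z).

Lemma pmet_Dfun {X : Type} (A : (X -> R) -> Prop) : inhabited X ->
  (forall f, A f -> bnd f) -> pmet A Dfun.
Proof.
  intros Hi Hb. split; [|split].
  - intros; apply Dfun_refl; auto.
  - intros; apply Dfun_sym; auto.
  - intros; apply Dfun_tri; auto.
Qed.

Lemma in_le_max (l : list nat) i : In i l -> (i <= fold_right max 0%nat l)%nat.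
Proof.
  induction l as [|a l IH]; simpl; [tauto|]. intros [->|H]; [lia|specialize (IH H); lia].
Qed.

Lemma nat_cover {T : Type} (A : T -> Prop) d (U : nat -> T -> Prop) :
  compact_in A d -> (forall N, open_in A d (U N)) -> (forall x, A x -> exists N, U N x) ->
  (forall N M x, (N <= M)%nat -> U N x -> U M x) -> exists N, forall x, A x -> U N x.
Proof.
  intros Hc Ho Hcov Hmon. destruct (Hc nat U Ho Hcov) as [l Hl].
  exists (fold_right max 0%nat l). intros x Hx. destruct (Hl x Hx) as [i [Hi Hu]].
  eapply Hmon; [apply in_le_max; exact Hi| exact Hu].
Qed.

Lemma compact_bounded {T : Type} (A : T -> Prop) d x0 : pmet A d -> compact_in A d -> A x0 ->
  exists M, forall y, A y -> d x0 y <= M.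
Proof.
  intros [d0 [ds dt]] Hc H0.
  destruct (nat_cover A d (fun N y => d x0 y < INR N) Hc) as [N HN].
  - intros N x Hx Hlt. exists (INR N - d x0 x). split; [lra|]. intros y Hy Hxy.
    pose proof (dt x0 x y H0 Hx Hy). lra.
  - intros x Hx. destruct (INR_unbounded (d x0 x)) as [n Hn]. exists n. lra.
  - intros N M x HNM Hx. pose proof (le_INR _ _ HNM). lra.
  - exists (INR N). intros y Hy. left. apply HN; auto.
Qed.

Lemma compact_centers {T : Type} (A : T -> Prop) d eps : pmet A d -> compact_in A d -> 0 < eps ->
  exists l : list T, forall y, A y -> exists c, In c l /\ A c /\ d c y < eps.
Proof.
  intros [d0 [ds dt]] Hc He.
  destruct (Hc T (fun c y => A c /\ d c y < eps)) as [l Hl].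
  - intros c y Hy [Hc' Hlt]. exists (eps - d c y). split; [lra|]. intros z Hz Hyz.
    split; auto. pose proof (dt c y z Hc' Hy Hz). lra.
  - intros y Hy. exists y. split; auto. rewrite d0; auto.
  - exists l. intros y Hy. destruct (Hl y Hy) as [c [Hin [Ha Hlt]]]. eauto.
Qed.

Lemma compact_complete {T : Type} (A : T -> Prop) d : pmet A d -> compact_in A d -> complete_in A d.
Proof.
  intros [d0 [ds dt]] Hc u Hu Hcau.
  apply NNPP; intro Hno.
  destruct (nat_cover A d (fun N x => exists e, 0 < e /\ forall n, (N <= n)%nat -> e < d (u n) x) Hc)
    as [N HN].
  - intros N x Hx [e [He Hn]]. exists (e/2). split; [lra|]. intros y Hy Hxy.
    exists (e/2). split; [lra|]. intros n Hn'. specialize (Hn n Hn').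
    pose proof (dt (u n) y x (Hu n) Hy Hx) as H. rewrite (ds y x Hy Hx) in H. lra.
  - intros x Hx.
    assert (Hnl : ~ (forall eps, 0 < eps -> exists N, forall n, (N <= n)%nat -> d (u n) x < eps)).
    { intro Hl. apply Hno. exists x. auto. }
    apply not_all_ex_not in Hnl. destruct Hnl as [eps Heps].
    apply imply_to_and in Heps. destruct Heps as [Hep Hex].
    destruct (Hcau (eps/2)) as [N0 HN0]; [lra|].
    assert (H : exists n, (N0 <= n)%nat /\ eps <= d (u n) x).
    { apply NNPP; intro Hne. apply Hex. exists N0. intros n Hn.
      apply Rnot_le_lt. intro Hle. apply Hne. eauto. }
    destruct H as [n [Hn Hd]].
    exists N0. exists (eps/2). split; [lra|]. intros m Hm.
    pose proof (dt (u n) (u m) x (Hu n) (Hu m) Hx). specialize (HN0 n m Hn Hm). lra.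
  - intros N M x HNM [e [He Hn]]. exists e. split; auto. intros n Hn'. apply Hn. lia.
  - destruct (HN (u N) (Hu N)) as [e [He Hn]]. specialize (Hn N (le_n _)).
    rewrite d0 in Hn; auto. lra.
Qed.

Definition nofin {T I : Type} (U : I -> T -> Prop) (S : T -> Prop) :=
  ~ exists l : list I, forall x, S x -> exists i, In i l /\ U i x.

Lemma nofin_ne {T I : Type} U S : @nofin T I U S -> exists x, S x.
Proof.
  intros H. apply NNPP; intro Hn. apply H. exists nil. intros x Hx. exfalso; apply Hn; eauto.
Qed.

Lemma nofin_mono {T I : Type} U (S S' : T -> Prop) :
  (forall x, S x -> S' x) -> @nofin T I U S -> nofin U S'.
Proof. intros Hs H [l Hl]. apply H. exists l. auto. Qed.

Lemma split_list {T I L : Type} (U : I -> T -> Prop) (P : L -> T -> Prop) (labs : list L) :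
  forall S, nofin U S -> (forall x, S x -> exists a, In a labs /\ P a x) ->
  exists a, In a labs /\ nofin U (fun x => S x /\ P a x).
Proof.
  induction labs as [|a labs IH]; intros S Hn Hcov.
  - destruct (nofin_ne U S Hn) as [x Hx]. destruct (Hcov x Hx) as [a [[] _]].
  - destruct (classic (nofin U (fun x => S x /\ P a x))) as [Ha|Ha].
    + exists a. split; [left; auto| auto].
    + unfold nofin in Ha. apply NNPP in Ha. destruct Ha as [la Hla].
      destruct (IH (fun x => S x /\ ~ P a x)) as [b [Hb Hbn]].
      * intros [lb Hlb]. apply Hn. exists (la ++ lb). intros x Hx.
        destruct (classic (P a x)) as [Hp|Hp].
        -- destruct (Hla x (conj Hx Hp)) as [i [Hi Hu]]. exists i. split; auto.
           apply in_or_app; auto.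
        -- destruct (Hlb x (conj Hx Hp)) as [i [Hi Hu]]. exists i. split; auto.
           apply in_or_app; auto.
      * intros x [Hx Hp]. destruct (Hcov x Hx) as [c [[<-|Hc] Hpc]]; [contradiction| eauto].
      * exists b. split; [right; auto|]. eapply nofin_mono; [|exact Hbn]. simpl. tauto.
Qed.

Lemma inv_le_N (N m : nat) : (0 < N)%nat -> (N <= m)%nat -> / INR m <= / INR N.
Proof.
  intros H1 H2. apply Rinv_le_contravar; [apply lt_0_INR; lia| apply le_INR; lia].
Qed.

Lemma compact_from_split {T : Type} (A : T -> Prop) d : pmet A d -> complete_in A d ->
  (forall (I : Type) (U : I -> T -> Prop) eps, 0 < eps -> forall W : T -> Prop,
     (forall x, W x -> A x) -> nofin U W ->
     exists W' : T -> Prop, (forall x, W' x -> W x) /\ nofin U W' /\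
        forall x y, W' x -> W' y -> d x y <= eps) ->
  compact_in A d.
Proof.
  intros [d0 [ds dt]] Hcomp Hsplit I U Ho Hcov.
  apply NNPP; intro HA. change (nofin U A) in HA.
  pose (good := fun (W : T -> Prop) => (forall x, W x -> A x) /\ nofin U W).
  pose (prop := fun (W : T -> Prop) (n : nat) (W' : T -> Prop) =>
     good W' /\ (forall x, W' x -> W x) /\ forall x y, W' x -> W' y -> d x y <= / INR (S n)).
  assert (Hstep : forall W n, good W -> exists W', prop W n W').
  { intros W n [HWA HWn]. destruct (Hsplit I U (/ INR (S n))) with (W := W) as [W' [H1 [H2 H3]]];
      auto.
    - apply Rinv_0_lt_compat. apply lt_0_INR. lia.
    - exists W'. split; [split|split]; auto. }
  pose (step := fun W n => epsilon (inhabits W) (fun W' => prop W n W')).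
  pose (seqS := fix f (n : nat) : T -> Prop := match n with O => A | S m => step (f m) m end).
  assert (Hgood : forall n, good (seqS n) /\ (forall x, seqS (S n) x -> seqS n x) /\
     forall x y, seqS (S n) x -> seqS (S n) y -> d x y <= / INR (S n)).
  { induction n as [|n IH].
    - assert (H : good A) by (split; auto).
      destruct (epsilon_spec (inhabits A) (fun W' => prop A 0%nat W') (Hstep A 0%nat H))
        as [_ [H2 H3]]. split; auto.
    - destruct IH as [[IH1 IH2] _].
      pose proof (epsilon_spec (inhabits (seqS n)) (fun W' => prop (seqS n) n W')
                   (Hstep _ n (conj IH1 IH2))) as Hn.
      destruct Hn as [Hg1 _].
      assert (H : good (seqS (S n))) by exact Hg1.
      destruct (epsilon_spec (inhabits (seqS (S n))) (fun W' => prop (seqS (S n)) (S n) W')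
                 (Hstep _ (S n) H)) as [_ [H2 H3]].
      split; auto. }
  assert (Hnest : forall n m, (n <= m)%nat -> forall x, seqS m x -> seqS n x).
  { intros n m Hnm. induction Hnm; auto. intros x Hx. apply IHHnm. apply (proj1 (proj2 (Hgood m))).
    exact Hx. }
  assert (Hne : forall n, exists x, seqS (S n) x).
  { intro n. destruct (Hgood (S n)) as [[_ Hn] _]. apply (nofin_ne U); auto. }
  destruct (nofin_ne U A HA) as [x0 _].
  pose (xs := fun n => epsilon (inhabits x0) (fun x => seqS (S n) x)).
  assert (Hxs : forall n, seqS (S n) (xs n)).
  { intro n. apply (epsilon_spec (inhabits x0) (fun x => seqS (S n) x)). apply Hne. }
  assert (HA' : forall n x, seqS n x -> A x).
  { intros n x Hx. destruct (Hgood n) as [[H _] _]. auto. }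
  destruct (Hcomp xs) as [l [Hl Hconv]].
  - intro n. eapply HA'. apply Hxs.
  - intros eps Heps. destruct (archimed_cor1 eps Heps) as [N [HN HN0]].
    exists N. intros m n Hm Hn.
    assert (H1 : seqS (S N) (xs m)) by (apply (Hnest (S N) (S m)); [lia| apply Hxs]).
    assert (H2 : seqS (S N) (xs n)) by (apply (Hnest (S N) (S n)); [lia| apply Hxs]).
    pose proof (proj2 (proj2 (Hgood N)) _ _ H1 H2).
    pose proof (inv_le_N N (S N) HN0 ltac:(lia)). lra.
  - destruct (Hcov l Hl) as [i Hi]. destruct (Ho i l Hl Hi) as [r [Hr Hball]].
    destruct (archimed_cor1 (r/2)) as [N1 [HN1 HN10]]; [lra|].
    destruct (Hconv (r/2)) as [N2 HN2]; [lra|].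
    set (n := Nat.max N1 N2).
    apply (proj2 (proj1 (Hgood (S n)))). exists (i :: nil). intros y Hy.
    exists i. split; [left; auto|]. apply Hball; [eapply HA'; eauto|].
    pose proof (HN2 n ltac:(unfold n; lia)) as Hd1.
    pose proof (proj2 (proj2 (Hgood n)) _ _ (Hxs n) Hy) as Hd2.
    pose proof (inv_le_N N1 (S n) HN10 ltac:(unfold n; lia)).
    pose proof (dt l (xs n) y Hl (HA' _ _ (Hxs n)) (HA' _ _ Hy)).
    rewrite (ds l (xs n) Hl (HA' _ _ (Hxs n))) in H0. lra.
Qed.

Lemma DGEN_lub {X Y : Type} (Phi : (X -> R) -> Prop) (F1 F2 : (X -> R) -> (Y -> R)) B :
  (exists phi, Phi phi) -> (forall phi, Phi phi -> Dfun (F1 phi) (F2 phi) <= B) ->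
  is_lub (fun r => exists phi, Phi phi /\ r = Dfun (F1 phi) (F2 phi)) (DGENEO Phi F1 F2).
Proof.
  intros [p0 Hp0] HB. apply supR_spec.
  - exists (Dfun (F1 p0) (F2 p0)). eauto.
  - exists B. intros r [phi [Hp ->]]. auto.
Qed.

Lemma DGEN_ub {X Y : Type} (Phi : (X -> R) -> Prop) (F1 F2 : (X -> R) -> (Y -> R)) B phi :
  (forall phi, Phi phi -> Dfun (F1 phi) (F2 phi) <= B) -> Phi phi ->
  Dfun (F1 phi) (F2 phi) <= DGENEO Phi F1 F2.
Proof.
  intros HB Hp. destruct (DGEN_lub Phi F1 F2 B (ex_intro _ phi Hp) HB) as [H _].
  apply H. eauto.
Qed.

Lemma DGEN_le {X Y : Type} (Phi : (X -> R) -> Prop) (F1 F2 : (X -> R) -> (Y -> R)) B c :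
  (exists phi, Phi phi) -> (forall phi, Phi phi -> Dfun (F1 phi) (F2 phi) <= B) ->
  (forall phi, Phi phi -> Dfun (F1 phi) (F2 phi) <= c) -> DGENEO Phi F1 F2 <= c.
Proof.
  intros He HB Hc. destruct (DGEN_lub Phi F1 F2 B He HB) as [_ H].
  apply H. intros r [phi [Hp ->]]. auto.
Qed.

Theorem mainTheorem10 (X Y : Type) (Phi : (X -> R) -> Prop) (G : (X -> X) -> Prop)
  (Psi : (Y -> R) -> Prop) (H : (Y -> Y) -> Prop) (T : (X -> X) -> (Y -> Y)) :
  perception_pair Phi G -> perception_pair Psi H -> is_hom G H T ->
  compact_in (is_GENEO Phi G Psi T) (DGENEO Phi).
Proof.
  intros [HXi [[phi0 Hphi0] [HPhib [HPhic [_ [[HGh _] _]]]]]]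
         [HYi [[psi0 Hpsi0] [HPsib [HPsic _]]]] _.
  assert (bPhi : forall f, Phi f -> bnd f) by exact HPhib.
  assert (bPsi : forall f, Psi f -> bnd f) by exact HPsib.
  pose proof (pmet_Dfun Phi HXi bPhi) as mPhi.
  pose proof (pmet_Dfun Psi HYi bPsi) as mPsi.
  destruct (compact_bounded Psi Dfun psi0 mPsi HPsic Hpsi0) as [M HM].
  set (Gen := is_GENEO Phi G Psi T).
  assert (HB : forall F1 F2, Gen F1 -> Gen F2 -> forall phi, Phi phi ->
             Dfun (F1 phi) (F2 phi) <= 2 * M).
  { intros F1 F2 [A1 _] [A2 _] phi Hp.
    pose proof (Dfun_tri (F1 phi) psi0 (F2 phi) HYi (bPsi _ (A1 _ Hp)) (bPsi _ Hpsi0)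
                  (bPsi _ (A2 _ Hp))).
    rewrite (Dfun_sym (F1 phi) psi0 HYi (bPsi _ (A1 _ Hp)) (bPsi _ Hpsi0)) in H0.
    pose proof (HM _ (A1 _ Hp)). pose proof (HM _ (A2 _ Hp)). lra. }
  assert (HPhine : exists phi, Phi phi) by eauto.
  assert (mGen : pmet Gen (DGENEO Phi)).
  { split; [|split].
    - intros F HF. apply Rle_antisym.
      + apply (DGEN_le _ _ _ (2*M)); auto. intros phi Hp.
        rewrite Dfun_refl; auto. lra. apply bPsi. apply HF; auto.
      + pose proof (DGEN_ub Phi F F (2*M) phi0 (HB F F HF HF) Hphi0).
        rewrite Dfun_refl in H0; auto. apply bPsi. apply HF; auto.
    - intros F1 F2 H1 H2. apply Rle_antisym.
      + apply (DGEN_le _ _ _ (2*M)); auto. intros phi Hp.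
        rewrite Dfun_sym; auto; try (apply bPsi; first [apply H1 | apply H2]; auto).
        apply (DGEN_ub _ _ _ (2*M)); auto.
      + apply (DGEN_le _ _ _ (2*M)); auto. intros phi Hp.
        rewrite Dfun_sym; auto; try (apply bPsi; first [apply H1 | apply H2]; auto).
        apply (DGEN_ub _ _ _ (2*M)); auto.
    - intros F1 F2 F3 H1 H2 H3.
      apply (DGEN_le _ _ _ (2*M)); auto. intros phi Hp.
      eapply Rle_trans; [apply (Dfun_tri _ (F2 phi)); auto;
         apply bPsi; first [apply H1 | apply H2 | apply H3]; auto|].
      apply Rplus_le_compat; apply (DGEN_ub _ _ _ (2*M)); auto. }
  apply (compact_from_split Gen (DGENEO Phi) mGen).
  - intros u Hu Hcau.
    pose proof (compact_complete Psi Dfun mPsi HPsic) as HPsiC.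
    assert (Hcp : forall phi, Phi phi -> forall n m, Dfun (u n phi) (u m phi) <= DGENEO Phi (u n) (u m)).
    { intros phi Hp n m. apply (DGEN_ub _ _ _ (2*M)); auto. }
    pose (lim := fun phi => epsilon (inhabits (fun _ : Y => 0)) (fun l => Psi l /\
       forall eps, 0 < eps -> exists N, forall n, (N <= n)%nat -> Dfun (u n phi) l < eps)).
    assert (Hlim : forall phi, Phi phi -> Psi (lim phi) /\
       forall eps, 0 < eps -> exists N, forall n, (N <= n)%nat -> Dfun (u n phi) (lim phi) < eps).
    { intros phi Hp. apply (epsilon_spec (inhabits (fun _ : Y => 0)) (fun l => Psi l /\
       forall eps, 0 < eps -> exists N, forall n, (N <= n)%nat -> Dfun (u n phi) l < eps)).
      apply (HPsiC (fun n => u n phi)).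
      - intro n. apply (Hu n); auto.
      - intros eps He. destruct (Hcau eps He) as [N HN]. exists N. intros m n Hm Hn.
        eapply Rle_lt_trans; [apply Hcp; auto| auto]. }
    assert (bu : forall n phi, Phi phi -> bnd (u n phi)) by (intros; apply bPsi; apply (Hu n); auto).
    assert (bl : forall phi, Phi phi -> bnd (lim phi)) by (intros; apply bPsi; apply Hlim; auto).
    assert (Hpt : forall phi, Phi phi -> forall eps, 0 < eps -> exists N, forall n, (N <= n)%nat ->
        forall y, Rabs (u n phi y - lim phi y) < eps).
    { intros phi Hp eps He. destruct (proj2 (Hlim phi Hp) eps He) as [N HN]. exists N.
      intros n Hn y. eapply Rle_lt_trans; [apply Dfun_ub; auto| apply HN; auto]. }
    assert (HGen : Gen lim).
    { split; [|split].
      - intros phi Hp. apply Hlim; auto.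
      - intros phi g Hp Hg. destruct (HGh g Hg) as [gi [_ [_ [_ [_ Hc]]]]].
        destruct (Hc phi Hp) as [Hpg _].
        apply functional_extensionality; intro y.
        apply NNPP; intro Hneq.
        set (eps := Rabs (lim (fun x => phi (g x)) y - lim phi (T g y)) / 3).
        assert (He : 0 < eps).
        { unfold eps. assert (0 < Rabs (lim (fun x => phi (g x)) y - lim phi (T g y))).
          { apply Rabs_pos_lt. intro Hz. apply Hneq. lra. } lra. }
        destruct (Hpt _ Hpg eps He) as [N1 HN1]. destruct (Hpt _ Hp eps He) as [N2 HN2].
        specialize (HN1 (Nat.max N1 N2) ltac:(lia) y).
        specialize (HN2 (Nat.max N1 N2) ltac:(lia) (T g y)).
        destruct (Hu (Nat.max N1 N2)) as [_ [Heq _]].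
        rewrite (Heq phi g Hp Hg) in HN1. unfold eps in *. rabs.
      - intros p1 p2 H1 H2. apply Dfun_le; auto. intro y.
        apply Rnot_lt_le; intro Hlt.
        set (eps := (Rabs (lim p1 y - lim p2 y) - Dfun p1 p2) / 3).
        assert (He : 0 < eps) by (unfold eps; lra).
        destruct (Hpt _ H1 eps He) as [N1 HN1]. destruct (Hpt _ H2 eps He) as [N2 HN2].
        set (n := Nat.max N1 N2).
        specialize (HN1 n ltac:(unfold n; lia) y). specialize (HN2 n ltac:(unfold n; lia) y).
        destruct (Hu n) as [_ [_ Hlip]]. specialize (Hlip p1 p2 H1 H2).
        pose proof (Dfun_ub (u n p1) (u n p2) y (bu n p1 H1) (bu n p2 H2)).
        unfold eps in *. rabs. }
    exists lim. split; auto.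
    intros eps He. destruct (Hcau (eps/2)) as [N HN]; [lra|]. exists N. intros n Hn.
    apply Rle_lt_trans with (eps/2); [|lra].
    apply (DGEN_le _ _ _ (2*M)); auto. intros phi Hp.
    apply Dfun_le; auto. intro y. apply Rnot_lt_le; intro Hlt.
    set (del := (Rabs (u n phi y - lim phi y) - eps/2) / 2).
    assert (Hd : 0 < del) by (unfold del; lra).
    destruct (Hpt _ Hp del Hd) as [N' HN'].
    set (m := Nat.max N N').
    specialize (HN' m ltac:(unfold m; lia) y).
    specialize (HN n m Hn ltac:(unfold m; lia)).
    pose proof (Hcp phi Hp n m).
    pose proof (Dfun_ub (u n phi) (u m phi) y (bu n phi Hp) (bu m phi Hp)).
    unfold del in *. rabs.
  - intros I U eps Heps W HW Hn.
    set (e := eps / 4).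
    assert (He : 0 < e) by (unfold e; lra).
    destruct (compact_centers Phi Dfun e mPhi HPhic He) as [Lphi HLphi].
    destruct (compact_centers Psi Dfun e mPsi HPsic He) as [Lpsi HLpsi].
    assert (Hind : forall L : list (X -> R), exists W' : ((X -> R) -> (Y -> R)) -> Prop,
      (forall F, W' F -> W F) /\ nofin U W' /\
      forall c, In c L -> Phi c -> exists p, Psi p /\ forall F, W' F -> Dfun (F c) p < e).
    { induction L as [|c L IH].
      - exists W. split; auto. split; auto. intros c [].
      - destruct IH as [W1 [H1 [H2 H3]]].
        destruct (classic (Phi c)) as [Hc|Hc].
        + destruct (split_list U (fun p (F : (X -> R) -> (Y -> R)) => Psi p /\ Dfun (F c) p < e)
             Lpsi W1 H2) as [p [Hp Hnp]].
          * intros F HF. assert (HG : Gen F) by (apply HW; auto).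
            destruct HG as [HG1 _]. destruct (HLpsi (F c) (HG1 c Hc)) as [q [Hq [Hq1 Hq2]]].
            exists q. split; auto. split; auto.
            rewrite Dfun_sym; auto; apply bPsi; auto.
          * exists (fun F => W1 F /\ (Psi p /\ Dfun (F c) p < e)).
            split; [intros F [HF _]; auto|]. split; [auto|].
            intros c' [<-|Hin] Hc'.
            -- destruct (nofin_ne U _ Hnp) as [F0 [_ [Hp0 _]]].
               exists p. split; auto. intros F [_ [_ HF]]. auto.
            -- destruct (H3 c' Hin Hc') as [q [Hq HFq]]. exists q. split; auto.
               intros F [HF _]. auto.
        + exists W1. split; auto. split; auto. intros c' [<-|Hin] Hc'; [contradiction|].
          auto. }
    destruct (Hind Lphi) as [W' [H1 [H2 H3]]].
    exists W'. split; auto. split; auto.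
    intros F F' HF HF'.
    assert (GF : Gen F) by (apply HW; auto). assert (GF' : Gen F') by (apply HW; auto).
    apply (DGEN_le _ _ _ (2*M)); auto. intros phi Hp.
    destruct (HLphi phi Hp) as [c [Hin [Hc Hcd]]].
    destruct (H3 c Hin Hc) as [p [Hpp Hpd]].
    pose proof (Hpd F HF) as E1. pose proof (Hpd F' HF') as E2.
    destruct GF as [A1 [_ L1]]. destruct GF' as [A2 [_ L2]].
    specialize (L1 c phi Hc Hp). specialize (L2 c phi Hc Hp).
    assert (bF : forall q, Phi q -> bnd (F q)) by (intros; apply bPsi; auto).
    assert (bF' : forall q, Phi q -> bnd (F' q)) by (intros; apply bPsi; auto).
    apply Dfun_le; auto. intro y.
    pose proof (Dfun_ub (F c) (F phi) y (bF c Hc) (bF phi Hp)).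
    pose proof (Dfun_ub (F' c) (F' phi) y (bF' c Hc) (bF' phi Hp)).
    pose proof (Dfun_ub (F c) p y (bF c Hc) (bPsi p Hpp)).
    pose proof (Dfun_ub (F' c) p y (bF' c Hc) (bPsi p Hpp)).
    unfold e in *.
    assert (Rabs (F phi y - F' phi y) <= Rabs (F c y - F phi y) + Rabs (F c y - p y)
              + Rabs (F' c y - p y) + Rabs (F' c y - F' phi y)) by rabs.
    lra.
Qed.
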